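(* Let $M=\{0\}\cup\{2^{-n}:n\in\mathbb{N}\}\subseteq\mathbb{R}$ and $K=M\times[0,1]\subseteq\mathbb{R}^2$. Then $C^1(K)\neq C^1(\mathbb{R}^2|K)$, i.e. there is $f\in C^1(K)$ which is not the restriction to $K$ of any $C^1$ function on $\mathbb{R}^2$.
   Context: $C^1(K)$ is the set of $f:K\to\mathbb{R}$ admitting a continuous $df:K\to\mathbb{R}^2$ with $\lim_{y\to x,\,y\in K\setminus\{x\}}\frac{f(y)-f(x)-\langle df(x),y-x\rangle}{|y-x|}=0$ for all $x\in K$. $C^1(\mathbb{R}^2|K)=\{g|_K: g\in C^1(\mathbb{R}^2)\}$. *)

(* Defs.v *)
From Stdlib Require Import Reals Lra.
Open Scope R_scope.

Definition pt := (R * R)%type.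

Definition norm2 (v : pt) : R := sqrt (fst v * fst v + snd v * snd v).
Definition vsub (a b : pt) : pt := (fst a - fst b, snd a - snd b).
Definition dist2 (a b : pt) : R := norm2 (vsub a b).
Definition inner (a b : pt) : R := fst a * fst b + snd a * snd b.

Definition C1_on (K : pt -> Prop) (f : pt -> R) : Prop :=
  exists df : pt -> pt,
    (forall x, K x -> forall eps, eps > 0 -> exists delta, delta > 0 /\
       forall y, K y -> dist2 y x < delta -> dist2 (df y) (df x) < eps) /\
    (forall x, K x -> forall eps, eps > 0 -> exists delta, delta > 0 /\
       forall y, K y -> y <> x -> dist2 y x < delta ->
         Rabs ((f y - f x - inner (df x) (vsub y x)) / dist2 y x) < eps).

(* C^1(R^2): the same notion with K = R^2, i.e. Frechet differentiable
   with continuous derivative. *)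
Definition C1_R2 (g : pt -> R) : Prop := C1_on (fun _ => True) g.

Definition M (t : R) : Prop := t = 0 \/ exists n : nat, t = / (2 ^ n).

Definition Kset (p : pt) : Prop := M (fst p) /\ 0 <= snd p <= 1.

(* Main.v *)
Require Import Defs.
From Stdlib Require Import Reals Lra Psatz.
From Coquelicot Require Import Coquelicot.
Open Scope R_scope.

Lemma norm2_abs_snd0 a : norm2 (0, a) = Rabs a.
Proof. unfold norm2; simpl. rewrite <- sqrt_Rsqr_abs. f_equal. unfold Rsqr; ring. Qed.
Lemma norm2_abs_fst0 a : norm2 (a, 0) = Rabs a.
Proof. unfold norm2; simpl. rewrite <- sqrt_Rsqr_abs. f_equal. unfold Rsqr; ring. Qed.
Lemma norm2_fst v : Rabs (fst v) <= norm2 v.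
Proof. unfold norm2. rewrite <- sqrt_Rsqr_abs. apply sqrt_le_1_alt. unfold Rsqr; nra. Qed.
Lemma norm2_snd v : Rabs (snd v) <= norm2 v.
Proof. unfold norm2. rewrite <- sqrt_Rsqr_abs. apply sqrt_le_1_alt. unfold Rsqr; nra. Qed.
Lemma norm2_pos v : v <> (0,0) -> 0 < norm2 v.
Proof. intros H. unfold norm2. apply sqrt_lt_R0. destruct v as [a b]; simpl.
  destruct (Req_dec a 0); destruct (Req_dec b 0); subst; try congruence; nra. Qed.

Lemma pow2_pos n : 0 < 2 ^ n.
Proof. apply pow_lt; lra. Qed.

Lemma pow2_lt m n : (m < n)%nat -> 2 * 2 ^ m <= 2 ^ n.
Proof. intros H. change (2 * 2^m) with (2 ^ S m). apply Rle_pow; lia || lra. Qed.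

Lemma M_same x n : M x -> Rabs (x - / 2 ^ n) < / 2 ^ n / 2 -> x = / 2 ^ n.
Proof.
  intros [Hx|[m Hm]] H; subst.
  - pose proof (pow2_pos n). rewrite Rabs_left1 in H.
    + assert (0 < / 2^n) by (apply Rinv_0_lt_compat; lra). lra.
    + assert (0 < / 2^n) by (apply Rinv_0_lt_compat; lra). lra.
  - destruct (Nat.lt_total m n) as [Hlt|[Heq|Hgt]].
    + pose proof (pow2_lt _ _ Hlt). pose proof (pow2_pos m). pose proof (pow2_pos n).
      exfalso. assert (/ 2^m >= 2 * / 2^n).
      { apply Rle_ge. rewrite <- (Rmult_1_l (/ 2^m)).
        replace (2 * / 2^n) with (2 * 2^m / 2^n * / 2^m) by (field; lra).
        apply Rmult_le_compat_r. left; apply Rinv_0_lt_compat; lra.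
        apply (Rmult_le_reg_r (2^n)). lra. unfold Rdiv. rewrite Rmult_assoc, Rinv_l; lra. }
      assert (0 < / 2^n) by (apply Rinv_0_lt_compat; lra).
      rewrite Rabs_right in H; lra.
    + subst; reflexivity.
    + pose proof (pow2_lt _ _ Hgt). pose proof (pow2_pos m). pose proof (pow2_pos n).
      exfalso. assert (/ 2^m <= / 2^n / 2).
      { apply (Rmult_le_reg_r (2^m)). lra. rewrite Rinv_l by lra.
        apply (Rmult_le_reg_r (2 * 2^n)). lra.
        replace (/ 2 ^ n / 2 * 2 ^ m * (2 * 2 ^ n)) with (2^m) by (field; lra). lra. }
      assert (0 < / 2^m) by (apply Rinv_0_lt_compat; lra).
      rewrite Rabs_left1 in H; lra.
Qed.
Definition Ff (x y : R) := x*x*(y*y) / (x*x + y*y*y*y).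
Definition D (x y : R) := 2*(x*x)*y*(x*x - y*y*y*y) / ((x*x+y*y*y*y)*(x*x+y*y*y*y)).

Lemma Ff_x0 y : Ff 0 y = 0.
Proof. unfold Ff. unfold Rdiv. ring. Qed.
Lemma D_x0 y : D 0 y = 0.
Proof. unfold D. unfold Rdiv. ring. Qed.

Lemma Dbound x y e : 0 < e -> Rabs x < e*e/4 -> Rabs (D x y) < e.
Proof.
  intros He Hx.
  destruct (Req_dec x 0) as [->|Hx0]. { rewrite D_x0, Rabs_R0; lra. }
  assert (HS : 0 < x*x + y*y*y*y) by nra.
  unfold D, Rdiv. rewrite Rabs_mult, Rabs_inv. rewrite (Rabs_right ((x*x+y*y*y*y)*(x*x+y*y*y*y))) by nra.
  apply (Rmult_lt_reg_r ((x*x+y*y*y*y)*(x*x+y*y*y*y))). nra.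
  rewrite Rmult_assoc, Rinv_l, Rmult_1_r by nra.
  set (S := x*x+y*y*y*y) in *.
  assert (H1 : Rabs (2 * (x * x) * y * (x * x - y * y * y * y)) <= 2*(x*x)*Rabs y * S).
  { rewrite Rabs_mult.
    assert (E: Rabs (2 * (x * x) * y) = 2*(x*x)*Rabs y).
    { rewrite !Rabs_mult. rewrite (Rabs_right 2) by lra.
      rewrite <- Rabs_mult, (Rabs_right (x*x)) by nra. ring. }
    rewrite E. apply Rmult_le_compat_l. assert (0 <= Rabs y) by apply Rabs_pos. nra.
    unfold S. apply Rabs_le. nra. }
  assert (H2 : 2*(x*x)*Rabs y < e * S).
  { pose proof (Rabs_pos y). set (a := Rabs y) in *.
    assert (Ha4 : y*y*y*y = a*a*a*a).
    { unfold a. rewrite <- !Rabs_mult. rewrite Rabs_right; nra. }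
    assert (Hxx : x*x < e*e/4*(e*e/4)).
    { assert (x*x = Rabs x * Rabs x) by (rewrite <- Rabs_mult; rewrite Rabs_right; nra).
      pose proof (Rabs_pos x). nra. }
    unfold S; rewrite Ha4.
    destruct (Rlt_le_dec a (e/2)).
    - assert (0 < x*x) by nra. assert (0 <= a*a*a*a) by (assert (0<=a*a) by nra; nra).
      assert (2*a*(x*x) < e*(x*x)) by (apply Rmult_lt_compat_r; lra). nra.
    - assert (e/2*(e/2)*(e/2) <= a*a*a) by (apply Rmult_le_compat; nra).
      assert (2*(x*x) < e*(a*a*a)) by nra.
      nra. }
  nra.
Qed.

Lemma Ff_nonneg x y : 0 <= Ff x y.
Proof. unfold Ff. destruct (Req_dec x 0) as [->|]. unfold Rdiv; nra.
  apply Rle_mult_inv_pos; nra. Qed.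


Lemma Ff_small0 x y d e : 0 < e -> 0 < d -> Rabs x <= d -> Rabs y <= d -> Rabs y < e -> Ff x y < e * d.
Proof.
  intros He Hd Hx Hyd Hy.
  destruct (Req_dec x 0) as [->|Hx0]. { rewrite Ff_x0; nra. }
  unfold Ff. apply (Rmult_lt_reg_r (x*x+y*y*y*y)). nra.
  unfold Rdiv; rewrite Rmult_assoc, Rinv_l, Rmult_1_r by nra.
  assert (y*y = Rabs y * Rabs y) by (rewrite <- Rabs_mult; rewrite Rabs_right; nra).
  pose proof (Rabs_pos y).
  assert (Rabs y * Rabs y < e * d) by nra.
  assert (y*y*y*y >= 0) by nra.
  assert (0 < x*x) by nra.
  assert (x*x*(y*y) < x*x*(e*d)) by (apply Rmult_lt_compat_l; lra).
  nra.
Qed.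

Lemma Ff_small1 x y d e c : 0 < e -> 0 < c -> 0 < d -> Rabs x <= d -> c <= Rabs y -> Rabs x < e*(c*c) -> Ff x y < e * d.
Proof.
  intros He Hc Hd Hx Hyc Hxe.
  destruct (Req_dec x 0) as [->|Hx0]. { rewrite Ff_x0. nra. }
  unfold Ff. apply (Rmult_lt_reg_r (x*x+y*y*y*y)). nra.
  unfold Rdiv; rewrite Rmult_assoc, Rinv_l, Rmult_1_r by nra.
  assert (Ey: y*y = Rabs y * Rabs y) by (rewrite <- Rabs_mult; rewrite Rabs_right; nra).
  assert (Ex: x*x = Rabs x * Rabs x) by (rewrite <- Rabs_mult; rewrite Rabs_right; nra).
  assert (0 < Rabs x) by (apply Rabs_pos_lt; auto).
  set (a := Rabs x) in *. set (b := Rabs y) in *.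
  assert (Hyy : y*y*y*y = b*b*(b*b)) by nra.
  rewrite Hyy.
  assert (c*c <= b*b) by nra.
  assert (0 < b) by lra.
  assert (0 < a*(b*b)) by (apply Rmult_lt_0_compat; nra).
  assert (HH: a*(a*(b*b)) < e*(c*c)*(a*(b*b))) by (apply Rmult_lt_compat_r; lra).
  assert (a*a*(b*b) < e*(c*c)*a*(b*b)) by (ring_simplify; ring_simplify in HH; lra).
  assert (e*(c*c)*a*(b*b) <= e*d*(b*b*(b*b))).
  { assert (e*(c*c)*a*(b*b) <= e*a*(b*b*(b*b))).
    { assert (0 <= e*a*(b*b)) by nra. nra. }
    assert (e*a*(b*b*(b*b)) <= e*d*(b*b*(b*b))) by (apply Rmult_le_compat_r; nra).
    lra. }
  rewrite Ex, Ey. assert (0 <= e*d*(a*a)) by (apply Rmult_le_pos; nra). nra.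
Qed.
Lemma Ff_deriv t y : t <> 0 -> derivable_pt_lim (fun y => Ff t y) y (D t y).
Proof.
  intros Ht. apply is_derive_Reals. unfold Ff, D.
  assert (0 < t*t + y*y*y*y) by nra.
  auto_derive. lra. field. lra.
Qed.

Lemma D_cont t y : t <> 0 -> continuity_pt (fun y => D t y) y.
Proof.
  intros Ht. apply continuity_pt_filterlim. apply (ex_derive_continuous (fun y => D t y)) .
  assert (0 < t*t + y*y*y*y) by nra.
  unfold D. auto_derive. nra.
Qed.

Definition fK (p : pt) : R := Ff (fst p) (snd p).
Definition dfK (p : pt) : pt := (0, D (fst p) (snd p)).

Lemma M_cases x : M x -> x = 0 \/ exists n, x = / 2 ^ n.
Proof. auto. Qed.

Lemma inv2pow_pos n : 0 < / 2 ^ n.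
Proof. apply Rinv_0_lt_compat, pow2_pos. Qed.

Lemma dist_fst a b : Rabs (fst a - fst b) <= dist2 a b.
Proof. apply (norm2_fst (vsub a b)). Qed.
Lemma dist_snd a b : Rabs (snd a - snd b) <= dist2 a b.
Proof. apply (norm2_snd (vsub a b)). Qed.

Lemma dist_pos a b : a <> b -> 0 < dist2 a b.
Proof. intros H. apply norm2_pos. destruct a as [a1 a2], b as [b1 b2]; unfold vsub; simpl.
  intros E. inversion E. apply H. f_equal; lra. Qed.

Lemma fK_C1 : C1_on Kset fK.
Proof.
  exists dfK. split.
  - intros [x0 y0] [Mx0 _] eps Heps. simpl in Mx0.
    destruct Mx0 as [->|[n ->]].
    + exists (eps*eps/4). split. nra.
      intros [x y] _ Hd. unfold dfK, dist2, vsub; simpl. rewrite D_x0.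
      replace (0-0) with 0 by ring. rewrite norm2_abs_snd0. rewrite Rminus_0_r.
      apply Dbound; auto. pose proof (dist_fst (x,y) (0,y0)). simpl in H. rewrite Rminus_0_r in H. lra.
    + set (t := / 2 ^ n). assert (Ht : 0 < t) by apply inv2pow_pos.
      destruct (D_cont t y0 ltac:(lra) eps Heps) as [alp [Halp Hc]].
      exists (Rmin alp (t/2)). split. apply Rmin_pos; lra.
      intros [x y] [Mx _] Hd. simpl in Mx.
      pose proof (dist_fst (x,y) (t,y0)) as H1. pose proof (dist_snd (x,y) (t,y0)) as H2. simpl in H1, H2.
      pose proof (Rmin_l alp (t/2)). pose proof (Rmin_r alp (t/2)).
      assert (x = t) by (apply M_same; auto; fold t; lra). subst x.
      unfold dfK, dist2, vsub; simpl. replace (0-0) with 0 by ring. rewrite norm2_abs_snd0.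
      destruct (Req_dec y y0) as [->|Hne]. { rewrite Rminus_diag, Rabs_R0. lra. }
      apply (Hc y). split. split. exact I. auto.
      simpl. unfold R_dist. lra.
  - intros [x0 y0] [Mx0 _] eps Heps. simpl in Mx0.
    destruct Mx0 as [->|[n ->]].
    + destruct (Req_dec y0 0) as [->|Hy0].
      * exists eps. split. lra. intros [x y] _ Hne Hd.
        pose proof (dist_pos _ _ Hne) as Hdp.
        pose proof (dist_fst (x,y) (0,0)) as H1. pose proof (dist_snd (x,y) (0,0)) as H2. simpl in H1, H2.
        unfold fK, dfK, inner; simpl. rewrite !Ff_x0, D_x0.
        set (d := dist2 (x,y) (0,0)) in *.
        replace ((Ff x y - 0 - (0 * (x - 0) + 0 * (y - 0))) / d) with (Ff x y / d) by (field; lra).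
        rewrite Rabs_right. 2: { apply Rle_ge. apply Rle_mult_inv_pos. apply Ff_nonneg. lra. }
        apply (Rmult_lt_reg_r d). lra. unfold Rdiv; rewrite Rmult_assoc, Rinv_l, Rmult_1_r by lra.
        apply Ff_small0; try lra. rewrite Rminus_0_r in H1; lra. rewrite Rminus_0_r in H2; lra. rewrite Rminus_0_r in H2; lra.
      * set (c := Rabs y0 / 2). assert (Hc : 0 < c) by (unfold c; pose proof (Rabs_pos_lt _ Hy0); lra).
        exists (Rmin c (eps*(c*c))). split. apply Rmin_pos; [lra| apply Rmult_lt_0_compat; nra].
        intros [x y] _ Hne Hd.
        pose proof (Rmin_l c (eps*(c*c))). pose proof (Rmin_r c (eps*(c*c))).
        pose proof (dist_pos _ _ Hne) as Hdp.
        pose proof (dist_fst (x,y) (0,y0)) as H1. pose proof (dist_snd (x,y) (0,y0)) as H2. simpl in H1, H2.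
        unfold fK, dfK, inner; simpl. rewrite !Ff_x0, D_x0.
        set (d := dist2 (x,y) (0,y0)) in *.
        replace ((Ff x y - 0 - (0 * (x - 0) + 0 * (y - y0))) / d) with (Ff x y / d) by (field; lra).
        rewrite Rabs_right. 2: { apply Rle_ge. apply Rle_mult_inv_pos. apply Ff_nonneg. lra. }
        apply (Rmult_lt_reg_r d). lra. unfold Rdiv; rewrite Rmult_assoc, Rinv_l, Rmult_1_r by lra.
        rewrite Rminus_0_r in H1.
        apply (Ff_small1 x y d eps c); try lra.
        pose proof (Rabs_triang_inv y0 (y0 - y)). replace (y0 - (y0 - y)) with y in H3 by ring.
        rewrite Rabs_minus_sym in H2. assert (Rabs y0 = 2*c) by (unfold c; lra). lra.
    + set (t := / 2 ^ n). assert (Ht : 0 < t) by apply inv2pow_pos.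
      destruct (Ff_deriv t y0 ltac:(lra) eps Heps) as [del Hdel].
      exists (Rmin del (t/2)). split. apply Rmin_pos. apply cond_pos. lra.
      intros [x y] [Mx _] Hne Hd. simpl in Mx.
      pose proof (dist_fst (x,y) (t,y0)) as H1. simpl in H1.
      pose proof (Rmin_l del (t/2)). pose proof (Rmin_r del (t/2)).
      assert (x = t) by (apply M_same; auto; fold t; lra). subst x.
      assert (Hy : y <> y0) by (intro; subst; auto).
      unfold fK, dfK, inner, dist2, vsub; simpl.
      replace (t - t) with 0 by ring. rewrite norm2_abs_snd0.
      specialize (Hdel (y - y0)). replace (y0 + (y - y0)) with y in Hdel by ring.
      assert (Hyy: y - y0 <> 0) by lra.
      assert (E : Rabs ((Ff t y - Ff t y0 - (0 * 0 + D t y0 * (y - y0))) / Rabs (y - y0))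
                = Rabs ((Ff t y - Ff t y0) / (y - y0) - D t y0)).
      { unfold Rdiv. rewrite Rabs_mult, Rabs_inv, Rabs_Rabsolu, <- Rabs_inv, <- Rabs_mult.
        f_equal. field. auto. }
      rewrite E. apply Hdel. auto.
      unfold dist2, vsub in Hd; simpl in Hd. replace (t - t) with 0 in Hd by ring.
      rewrite norm2_abs_snd0 in Hd. lra.
Qed.

Lemma small_pow e : 0 < e -> exists n, / 2 ^ n < e.
Proof.
  intros He. destruct (pow_lt_1_zero (/2) ltac:(rewrite Rabs_right; lra) e He) as [N HN].
  exists N. specialize (HN N (le_n _)). rewrite pow_inv in HN.
  rewrite Rabs_right in HN. auto. left; apply inv2pow_pos.
Qed.

Lemma abs_div_abs A h : h <> 0 -> Rabs (A / Rabs h) = Rabs (A / h).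
Proof. intros Hh. unfold Rdiv. rewrite !Rabs_mult, !Rabs_inv, Rabs_Rabsolu. reflexivity. Qed.

Lemma no_ext : ~ (exists g : pt -> R, C1_R2 g /\ forall x, Kset x -> g x = fK x).
Proof.
  intros [g [[dg [Hc Hw]] Hgf]].
  set (a := fst (dg (0,0))).
  assert (Hg0 : g (0,0) = 0).
  { rewrite Hgf. unfold fK; simpl. apply Ff_x0. split. left; reflexivity. simpl; lra. }
  assert (Ha : a = 0).
  { destruct (Req_dec a 0) as [|Hna]; auto. exfalso.
    pose proof (Rabs_pos_lt _ Hna) as Hap.
    destruct (Hw (0,0) I (Rabs a) Hap) as [del [Hdel Hw0]].
    destruct (small_pow del Hdel) as [n Hn].
    set (t := / 2 ^ n) in *. assert (Ht : 0 < t) by apply inv2pow_pos.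
    assert (Hne : (t, 0) <> (0,0)). { intro E; inversion E; lra. }
    assert (Hdt : dist2 (t,0) (0,0) = t).
    { unfold dist2, vsub; simpl. replace (t-0) with t by ring. replace (0-0) with 0 by ring.
      rewrite norm2_abs_fst0. apply Rabs_right; lra. }
    specialize (Hw0 (t,0) I Hne ltac:(lra)).
    rewrite Hdt, Hg0, Hgf in Hw0.
    2: { split. right. exists n; reflexivity. simpl; lra. }
    unfold fK, inner, vsub in Hw0; simpl in Hw0. fold a in Hw0.
    replace ((Ff t 0 - 0 - (a * (t - 0) + snd (dg (0, 0)) * (0 - 0))) / t) with (- a) in Hw0.
    2: { unfold Ff. field. lra. }
    rewrite Rabs_Ropp in Hw0. lra. }
  destruct (Hc (0,0) I (1/4) ltac:(lra)) as [del1 [Hdel1 Hc0]].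
  assert (Hsmall : forall q, dist2 q (0,0) < del1 -> Rabs (fst (dg q)) < 1/4).
  { intros q Hq. specialize (Hc0 q I Hq). pose proof (dist_fst (dg q) (dg (0,0))).
    fold a in H. rewrite Ha, Rminus_0_r in H. lra. }
  destruct (small_pow (del1/2) ltac:(lra)) as [k Hk].
  set (s := / 2 ^ k) in *. assert (Hs : 0 < s) by apply inv2pow_pos.
  assert (Hs1 : s <= 1).
  { unfold s. pose proof (pow_R1_Rle 2 k ltac:(lra)). rewrite <- Rinv_1. apply Rinv_le_contravar; lra. }
  set (t := / 2 ^ (k+k)).
  assert (Hts : t = s*s) by (unfold t, s; rewrite pow_add, Rinv_mult; reflexivity).
  set (t2 := / 2 ^ (S (k+k))).
  assert (Ht2 : t2 = t/2) by (unfold t2, t; simpl; rewrite Rinv_mult; unfold Rdiv; ring).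
  set (h := fun x => g (x, s)).
  assert (Hder : forall x, derivable_pt_lim h x (fst (dg (x, s)))).
  { intros x eps Heps. destruct (Hw (x,s) I eps Heps) as [del [Hdel Hwx]].
    exists (mkposreal del Hdel). intros hh Hh Hhd. simpl in Hhd.
    assert (Hne : (x+hh, s) <> (x,s)). { intro E; inversion E; lra. }
    assert (Hd : dist2 (x+hh, s) (x,s) = Rabs hh).
    { unfold dist2, vsub; simpl. replace (x+hh-x) with hh by ring. replace (s-s) with 0 by ring.
      apply norm2_abs_fst0. }
    specialize (Hwx (x+hh,s) I Hne ltac:(lra)). rewrite Hd, abs_div_abs in Hwx by auto.
    unfold inner, vsub in Hwx; simpl in Hwx. unfold h.
    replace ((g (x + hh, s) - g (x, s)) / hh - fst (dg (x, s)))
      with ((g (x + hh, s) - g (x, s) - (fst (dg (x, s)) * (x + hh - x) + snd (dg (x, s)) * (s - s))) / hh)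
      by (field; auto).
    exact Hwx. }
  assert (Ht0 : 0 < t) by (rewrite Hts; nra).
  destruct (MVT_gen h t2 t (fun x => fst (dg (x, s)))) as [c [Hcr Hceq]].
  { intros x _. apply is_derive_Reals. apply Hder. }
  { intros x _. apply derivable_continuous_pt. exists (fst (dg (x, s))). apply Hder. }
  rewrite Rmin_left in Hcr by lra. rewrite Rmax_right in Hcr by lra.
  assert (Hcd : dist2 (c, s) (0,0) < del1).
  { unfold dist2, vsub, norm2; simpl. rewrite <- (sqrt_Rsqr del1) by lra.
    apply sqrt_lt_1_alt. unfold Rsqr. split. nra.
    assert (c <= s) by nra. nra. }
  specialize (Hsmall _ Hcd).
  assert (Eh1 : h t = t / 2).
  { unfold h. rewrite Hgf. unfold fK, Ff; simpl. rewrite Hts. field. nra.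
    split. right. exists (k+k)%nat. reflexivity. simpl; lra. }
  assert (Eh2 : h t2 = t / 5).
  { unfold h. rewrite Hgf. unfold fK, Ff; simpl. rewrite Ht2, Hts. field. nra.
    split. right. exists (S (k+k))%nat. reflexivity. simpl; lra. }
  rewrite Eh1, Eh2, Ht2 in Hceq.
  set (dd := fst (dg (c, s))) in *.
  assert (dd = 3/5) by (apply (Rmult_eq_reg_r (t - t/2)); [lra | lra]).
  rewrite H in Hsmall. rewrite Rabs_right in Hsmall; lra.
Qed.

Theorem mainTheorem13 :
  exists f : pt -> R, C1_on Kset f /\
    ~ (exists g : pt -> R, C1_R2 g /\ forall x, Kset x -> g x = f x).
Proof. exists fK. split. apply fK_C1. apply no_ext. Qed.
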